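(* Fix bidder $i$, $v_{-i}$ and $\Delta>0$. Let $x^*,x$ be allocation rules such that $k\mapsto x^*_i(z_{i,k},v_{-i})$ and $k\mapsto x_i(z_{i,k},v_{-i})$ are non-decreasing and $|x^*_i(z_{i,j},v_{-i})-x_i(z_{i,j},v_{-i})|\le\Delta$ for all $j$. Let $p^*_i=\sqrt{q^*_i}$ and $p_i=\sqrt{q_i}$ where $q^*_i,q_i$ are given by the payment formula $q_i(z_{i,\ell},v_{-i})=z_{i,\ell}x_i(z_{i,\ell},v_{-i})-\sum_{j=1}^{\ell-1}(z_{i,j+1}-z_{i,j})x_i(z_{i,j},v_{-i})$ (likewise for $x^*$). Then $$\Big|\sum_{k=1}^{K_i}f_{i,k}\big(p^*_i(z_{i,k},v_{-i})-p_i(z_{i,k},v_{-i})\big)\Big|\le\sqrt{2\Delta\,(2z_{i,K_i}-z_{i,1})},$$ in particular it is $O(\sqrt{\Delta})$.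
   Context: Bidder $i$'s type space is $V_i=\{z_{i,1}<\dots<z_{i,K_i}\}\subset[0,\infty)$ with pmf $f_{i,k}$; allocations lie in $[0,1]$. (Under monotonicity the payment-formula values are nonnegative, so the square roots are defined.) *)

(* Defs.v *)
From Stdlib Require Import Reals.
Open Scope R_scope.

Fixpoint sum1 (g : nat -> R) (n : nat) : R :=
  match n with
  | O => 0
  | S m => sum1 g m + g (S m)
  end.

(* Payment formula (for fixed bidder i and fixed v_{-i}); types indexed 1..K:
   q(z_l) = z_l x(z_l) - sum_{j=1}^{l-1} (z_{j+1} - z_j) x(z_j). *)
Definition payment (z x : nat -> R) (l : nat) : R :=
  z l * x l - sum1 (fun j => (z (S j) - z j) * x j) (l - 1).

(* Main.v *)
Require Import Defs.
From Stdlib Require Import Reals Lra Lia.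
Open Scope R_scope.

Lemma sqrt_diff_nn a b : 0 <= b -> b <= a -> sqrt a - sqrt b <= sqrt (a - b).
Proof.
  intros hb hab.
  assert (ha : 0 <= a) by lra.
  pose proof (sqrt_le_1_alt b a hab) as H1.
  pose proof (sqrt_pos b) as H2.
  pose proof (sqrt_sqrt a ha) as H3. pose proof (sqrt_sqrt b hb) as H4.
  rewrite <- (sqrt_square (sqrt a - sqrt b)) by lra.
  apply sqrt_le_1_alt. nra.
Qed.

Lemma sqrt_diff a b : Rabs (sqrt a - sqrt b) <= sqrt (Rabs (a - b)).
Proof.
  assert (G : forall a b, b <= a -> Rabs (sqrt a - sqrt b) <= sqrt (Rabs (a - b))).
  { clear a b. intros a b hab.
    rewrite (Rabs_right (a - b)) by lra.
    pose proof (sqrt_le_1_alt b a hab).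
    rewrite Rabs_right by lra.
    destruct (Rle_dec 0 b) as [hb|hb].
    - apply sqrt_diff_nn; lra.
    - rewrite (sqrt_neg_0 b) by lra.
      destruct (Rle_dec 0 a) as [ha|ha].
      + rewrite Rminus_0_r. apply sqrt_le_1_alt; lra.
      + rewrite (sqrt_neg_0 a) by lra. rewrite Rminus_0_r. apply sqrt_pos. }
  destruct (Rle_dec b a).
  - apply G; lra.
  - rewrite Rabs_minus_sym, (Rabs_minus_sym a). apply G; lra.
Qed.

Lemma sum1_minus g h n : sum1 g n - sum1 h n = sum1 (fun j => g j - h j) n.
Proof. induction n; simpl; lra. Qed.

Lemma sum1_ext g h n : (forall j, (1 <= j <= n)%nat -> g j = h j) -> sum1 g n = sum1 h n.
Proof.
  induction n; intros H; simpl; auto.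
  rewrite IHn by (intros; apply H; lia). rewrite H by lia. auto.
Qed.

Theorem mainTheorem15
  (K : nat) (z f xs x : nat -> R) (Delta : R)
  (hK : (1 <= K)%nat)
  (hz0 : 0 <= z 1%nat)
  (hzinc : forall k, (1 <= k)%nat -> (k < K)%nat -> z k < z (S k))
  (hf0 : forall k, (1 <= k)%nat -> (k <= K)%nat -> 0 <= f k)
  (hf1 : sum1 f K = 1)
  (hxs01 : forall k, (1 <= k)%nat -> (k <= K)%nat -> 0 <= xs k <= 1)
  (hx01 : forall k, (1 <= k)%nat -> (k <= K)%nat -> 0 <= x k <= 1)
  (hxsmon : forall k, (1 <= k)%nat -> (k < K)%nat -> xs k <= xs (S k))
  (hxmon : forall k, (1 <= k)%nat -> (k < K)%nat -> x k <= x (S k))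
  (hDelta : 0 < Delta)
  (hclose : forall j, (1 <= j)%nat -> (j <= K)%nat -> Rabs (xs j - x j) <= Delta) :
  Rabs (sum1 (fun k => f k * (sqrt (payment z xs k) - sqrt (payment z x k))) K)
    <= sqrt (2 * Delta * (2 * z K - z 1%nat)).
Proof.
  assert (zlo : forall l, (1 <= l <= K)%nat -> z 1%nat <= z l).
  { intros l. induction l; intros hl; [lia|].
    destruct (Nat.eq_dec l 0) as [->|hn]; [lra|].
    pose proof (hzinc l ltac:(lia) ltac:(lia)). pose proof (IHl ltac:(lia)). lra. }
  assert (zhi : forall l, (1 <= l <= K)%nat -> z l <= z K).
  { intros l hl. remember (K - l)%nat as d. revert l hl Heqd. induction d; intros l hl Hd.
    - replace l with K by lia. lra.
    - pose proof (hzinc l ltac:(lia) ltac:(lia)). pose proof (IHd (S l) ltac:(lia) ltac:(lia)). lra. }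
  assert (sb : forall n, (n + 1 <= K)%nat ->
    Rabs (sum1 (fun j => (z (S j) - z j) * (xs j - x j)) n) <= Delta * (z (S n) - z 1%nat)).
  { induction n; intros hn; simpl.
    - rewrite Rabs_R0. lra.
    - eapply Rle_trans; [apply Rabs_triang|].
      pose proof (IHn ltac:(lia)).
      rewrite Rabs_mult.
      pose proof (hzinc (S n) ltac:(lia) ltac:(lia)).
      rewrite (Rabs_right (z (S (S n)) - z (S n))) by lra.
      pose proof (hclose (S n) ltac:(lia) ltac:(lia)).
      assert ((z (S (S n)) - z (S n)) * Rabs (xs (S n) - x (S n)) <= (z (S (S n)) - z (S n)) * Delta)
        by (apply Rmult_le_compat_l; lra).
      lra. }
  set (B := Delta * (2 * z K - z 1%nat)).
  assert (pb : forall l, (1 <= l <= K)%nat -> Rabs (payment z xs l - payment z x l) <= B).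
  { intros l hl. unfold payment.
    replace (z l * xs l - sum1 (fun j => (z (S j) - z j) * xs j) (l - 1) -
      (z l * x l - sum1 (fun j => (z (S j) - z j) * x j) (l - 1)))
     with (z l * (xs l - x l) - sum1 (fun j => (z (S j) - z j) * (xs j - x j)) (l - 1)).
    2:{ rewrite <- (Rplus_0_r (z l * (xs l - x l))).
        assert (E : sum1 (fun j => (z (S j) - z j) * xs j) (l - 1) - sum1 (fun j => (z (S j) - z j) * x j) (l - 1)
          = sum1 (fun j => (z (S j) - z j) * (xs j - x j)) (l - 1)).
        { rewrite sum1_minus. apply sum1_ext. intros; ring. }
        lra. }
    unfold Rminus at 1. eapply Rle_trans; [apply Rabs_triang|]. rewrite Rabs_Ropp.
    pose proof (sb (l - 1)%nat ltac:(lia)). replace (S (l - 1)) with l in H by lia.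
    rewrite Rabs_mult. pose proof (zlo l hl). pose proof (zhi l hl).
    rewrite (Rabs_right (z l)) by lra.
    pose proof (hclose l ltac:(lia) ltac:(lia)).
    assert (z l * Rabs (xs l - x l) <= z l * Delta) by (apply Rmult_le_compat_l; lra).
    unfold B.
    assert (Delta * z l <= Delta * z K) by (apply Rmult_le_compat_l; lra).
    lra. }
  assert (tb : forall n, (n <= K)%nat ->
    Rabs (sum1 (fun k => f k * (sqrt (payment z xs k) - sqrt (payment z x k))) n) <= sqrt B * sum1 f n).
  { induction n; intros hn; simpl.
    - rewrite Rabs_R0. lra.
    - eapply Rle_trans; [apply Rabs_triang|].
      pose proof (IHn ltac:(lia)). rewrite Rabs_mult.
      pose proof (hf0 (S n) ltac:(lia) ltac:(lia)).
      rewrite (Rabs_right (f (S n))) by lra.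
      pose proof (sqrt_diff (payment z xs (S n)) (payment z x (S n))).
      pose proof (sqrt_le_1_alt _ _ (pb (S n) ltac:(lia))).
      assert (f (S n) * Rabs (sqrt (payment z xs (S n)) - sqrt (payment z x (S n))) <= f (S n) * sqrt B)
        by (apply Rmult_le_compat_l; lra).
      lra. }
  eapply Rle_trans; [apply tb; lia|]. rewrite hf1, Rmult_1_r.
  apply sqrt_le_1_alt. unfold B.
  pose proof (zhi 1%nat ltac:(lia)).
  assert (0 <= Delta * (2 * z K - z 1%nat)) by (apply Rmult_le_pos; lra).
  lra.
Qed.
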